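(* Suppose Assumptions 1–4 hold and $p$ is convex. Let $$s=\inf\{q\ge0 : p(q)=\min_n C_n'(0)\},\qquad t=\inf\{q\ge0:\ \min_n C_n'(q)\ge p(q)+q\,\partial_+p(q)\}.$$ If $\partial_-p(s)<0$, then every Cournot candidate $\mathbf{x}$ satisfies $\gamma(\mathbf{x})\ge f\big(\partial_+p(t)/\partial_-p(s)\big)$.
   Context: Cournot model: $N$ suppliers, inverse demand $p:[0,\infty)\to[0,\infty)$, supplier $n$ has cost $C_n:[0,\infty)\to[0,\infty)$ and chooses $x_n\ge0$; $X=\sum_n x_n$. $\partial_\pm$ denote right/left derivatives; $C_n'(0)$ is the right derivative at $0$. Assumption 1: each $C_n$ is convex, continuous, nondecreasing on $[0,\infty)$, continuously differentiable on $(0,\infty)$, with $C_n(0)=0$. Assumption 2: $p$ is continuous, nonnegative, nonincreasing, $p(0)>0$; its right derivative at $0$ exists and at every $q>0$ its left and right derivatives exist. Assumption 3: there exists $R>0$ such that $p(R)\le\min_n C_n'(0)$ (this guarantees $s,t$ are finite). Assumption 4: $p(0)>\min_n C_n'(0)$. Social welfare of $\mathbf{x}\ge0$: $W(\mathbf{x})=\int_0^X p(q)\,dq-\sum_{n=1}^N C_n(x_n)$; a social optimum $\mathbf{x}^S$ maximizes $W$. Efficiency: $\gamma(\mathbf{x})=W(\mathbf{x})/W(\mathbf{x}^S)$. A nonnegative vector $\mathbf{x}$ is a Cournot candidate if for every $n$: $C_n'(x_n)\le p(X)+x_n\,\partial_-p(X)$ whenever $x_n>0$, and $C_n'(x_n)\ge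 p(X)+x_n\,\partial_+p(X)$. For $\overline c\ge1$: $f(\overline c)=\dfrac{\phi^2+2}{\phi^2+2\phi+\overline c}$ with $\phi=\max\left\{\dfrac{2-\overline c+\sqrt{\overline c^{\,2}-4\overline c+12}}{2},1\right\}$. *)

(* Defs.v *)
From Stdlib Require Import Reals Lra ClassicalEpsilon.
Open Scope R_scope.

(* Suppliers are indexed 0 .. N-1; a vector is a function nat -> R,
   only its first N entries matter. *)
Fixpoint sumN (N : nat) (f : nat -> R) : R :=
  match N with O => 0 | S k => sumN k f + f k end.

(* minN N f = min_{0 <= n < N} f n   (meaningful for N >= 1) *)
Fixpoint minN (N : nat) (f : nat -> R) : R :=
  match N with
  | O => 0
  | S k => match k with O => f O | _ => Rmin (minN k f) (f k) end
  end.

Definition right_deriv (f : R -> R) (x l : R) : Prop :=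
  forall eps, 0 < eps -> exists delta, 0 < delta /\
    forall h, 0 < h < delta -> Rabs ((f (x + h) - f x) / h - l) < eps.

Definition left_deriv (f : R -> R) (x l : R) : Prop :=
  forall eps, 0 < eps -> exists delta, 0 < delta /\
    forall h, 0 < h < delta -> Rabs ((f x - f (x - h)) / h - l) < eps.

Definition convex_on_nonneg (f : R -> R) : Prop :=
  forall x y lam, 0 <= x -> 0 <= y -> 0 <= lam <= 1 ->
    f (lam * x + (1 - lam) * y) <= lam * f x + (1 - lam) * f y.

Definition continuous_on_nonneg (f : R -> R) : Prop :=
  forall x, 0 <= x -> forall eps, 0 < eps -> exists delta, 0 < delta /\
    forall y, 0 <= y -> Rabs (y - x) < delta -> Rabs (f y - f x) < eps.

Definition nonincreasing_on_nonneg (f : R -> R) : Prop :=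
  forall x y, 0 <= x <= y -> f y <= f x.

Definition nondecreasing_on_nonneg (f : R -> R) : Prop :=
  forall x y, 0 <= x <= y -> f x <= f y.

Definition is_inf (S : R -> Prop) (m : R) : Prop :=
  (forall q, S q -> m <= q) /\
  (forall m', (forall q, S q -> m' <= q) -> m' <= m).

(* Riemann integral of f over [a,b] (its value when f is Riemann integrable) *)
Definition integral (f : R -> R) (a b : R) : R :=
  epsilon (inhabits 0)
    (fun v => exists pr : Riemann_integrable f a b, RiemannInt pr = v).

Definition assumption1 (N : nat) (C dC : nat -> R -> R) : Prop :=
  forall n, (n < N)%nat ->
    convex_on_nonneg (C n) /\ continuous_on_nonneg (C n) /\
    nondecreasing_on_nonneg (C n) /\
    (forall x, 0 < x -> derivable_pt_lim (C n) x (dC n x)) /\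
    (forall x, 0 < x -> continuity_pt (dC n) x) /\
    right_deriv (C n) 0 (dC n 0) /\
    C n 0 = 0.

Definition assumption2 (p dpl dpr : R -> R) : Prop :=
  continuous_on_nonneg p /\ (forall q, 0 <= q -> 0 <= p q) /\
  nonincreasing_on_nonneg p /\ 0 < p 0 /\
  (forall q, 0 <= q -> right_deriv p q (dpr q)) /\
  (forall q, 0 < q -> left_deriv p q (dpl q)).

Definition assumption3 (N : nat) (p : R -> R) (dC : nat -> R -> R) : Prop :=
  exists R0, 0 < R0 /\ p R0 <= minN N (fun n => dC n 0).

Definition assumption4 (N : nat) (p : R -> R) (dC : nat -> R -> R) : Prop :=
  minN N (fun n => dC n 0) < p 0.

Definition nonneg_vec (N : nat) (x : nat -> R) : Prop :=
  forall n, (n < N)%nat -> 0 <= x n.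

Definition welfare (N : nat) (p : R -> R) (C : nat -> R -> R) (x : nat -> R) : R :=
  integral p 0 (sumN N x) - sumN N (fun n => C n (x n)).

Definition social_optimum (N : nat) (p : R -> R) (C : nat -> R -> R)
    (xS : nat -> R) : Prop :=
  nonneg_vec N xS /\
  forall y, nonneg_vec N y -> welfare N p C y <= welfare N p C xS.

Definition efficiency (N : nat) (p : R -> R) (C : nat -> R -> R)
    (x xS : nat -> R) : R :=
  welfare N p C x / welfare N p C xS.

Definition cournot_candidate (N : nat) (p dpl dpr : R -> R)
    (dC : nat -> R -> R) (x : nat -> R) : Prop :=
  nonneg_vec N x /\
  forall n, (n < N)%nat ->
    (0 < x n -> dC n (x n) <= p (sumN N x) + x n * dpl (sumN N x)) /\
    p (sumN N x) + x n * dpr (sumN N x) <= dC n (x n).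

Definition phi_of (c : R) : R :=
  Rmax ((2 - c + sqrt (c ^ 2 - 4 * c + 12)) / 2) 1.

Definition f_bound (c : R) : R :=
  (phi_of c ^ 2 + 2) / (phi_of c ^ 2 + 2 * phi_of c + c).

(* Main.v *)
Require Import Defs.
From Stdlib Require Import Reals Lra Psatz ClassicalEpsilon Lia.
From Coquelicot Require Import Coquelicot.
Open Scope R_scope.

Lemma sumN_le N f g : (forall n, (n < N)%nat -> f n <= g n) -> sumN N f <= sumN N g.
Proof. induction N; simpl; intros H. lra. assert (f N <= g N) by (apply H; lia).
 assert (sumN N f <= sumN N g) by (apply IHN; intros; apply H; lia). lra. Qed.
Lemma sumN_ext N f g : (forall n, (n < N)%nat -> f n = g n) -> sumN N f = sumN N g.
Proof. intros H; apply Rle_antisym; apply sumN_le; intros n Hn; rewrite H; auto; lra. Qed.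
Lemma sumN_plus N f g : sumN N (fun n => f n + g n) = sumN N f + sumN N g.
Proof. induction N; simpl; lra. Qed.
Lemma sumN_scal N k f : sumN N (fun n => k * f n) = k * sumN N f.
Proof. induction N; simpl; [lra|rewrite IHN; ring]. Qed.
Lemma sumN_const0 N : sumN N (fun _ => 0) = 0.
Proof. induction N; simpl; lra. Qed.
Lemma sumN_nonneg N f : (forall n, (n < N)%nat -> 0 <= f n) -> 0 <= sumN N f.
Proof. intros H. rewrite <- (sumN_const0 N). apply sumN_le; auto. Qed.
Lemma sumN_term N f m : (forall n, (n < N)%nat -> 0 <= f n) -> (m < N)%nat -> f m <= sumN N f.
Proof. induction N; simpl; intros H Hm. lia.
 assert (0 <= sumN N f) by (apply sumN_nonneg; intros; apply H; lia).
 destruct (Nat.eq_dec m N). subst; lra.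
 assert (f m <= sumN N f) by (apply IHN; [intros; apply H; lia| lia]).
 assert (0 <= f N) by (apply H; lia). lra. Qed.
Lemma argmax N f : (1 <= N)%nat -> exists m, (m < N)%nat /\ forall n, (n < N)%nat -> f n <= f m.
Proof. induction N as [|N IHN]; intros H. lia. destruct N as [|N].
 exists 0%nat; split; [lia|]; intros n Hn; assert (n = 0%nat) by lia; subst; lra.
 destruct IHN as [m [Hm H2]]; [lia|].
 destruct (Rle_dec (f m) (f (S N))) as [Hle|Hle].
 exists (S N); split; [lia|]. intros n Hn. destruct (Nat.eq_dec n (S N)). subst; lra.
 assert (f n <= f m) by (apply H2; lia); lra.
 exists m; split; [lia|]. intros n Hn. destruct (Nat.eq_dec n (S N)). subst; lra. apply H2; lia. Qed.
Lemma minN_le N f n : (n < N)%nat -> minN N f <= f n.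
Proof. induction N as [|N IHN]; intros H. lia. simpl. destruct N as [|N].
 assert (n = 0%nat) by lia; subst; lra.
 destruct (Nat.eq_dec n (S N)). subst. apply Rmin_r.
 eapply Rle_trans; [apply Rmin_l| apply IHN; lia]. Qed.
Lemma minN_attained N f : (1 <= N)%nat -> exists n, (n < N)%nat /\ minN N f = f n.
Proof. induction N as [|N0 IHN]; intros H. lia. simpl. destruct N0. exists 0%nat; split; auto.
 destruct IHN as [m [Hm E]]; [lia|]. unfold Rmin. destruct (Rle_dec (minN (S N0) f) (f (S N0))).
 exists m; split; auto. exists (S N0); split; auto. Qed.
Lemma minN_ge N f k : (1 <= N)%nat -> (forall n, (n < N)%nat -> k <= f n) -> k <= minN N f.
Proof. intros H1 H. destruct (minN_attained N f H1) as [n [Hn E]]. rewrite E; auto. Qed.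

Lemma conv3 f u v w : convex_on_nonneg f -> 0 <= u -> u < v -> v < w ->
  (w - u) * f v <= (w - v) * f u + (v - u) * f w.
Proof. intros Hc Hu Huv Hvw.
 set (lam := (w - v) / (w - u)).
 assert (Hl : 0 <= lam <= 1). { unfold lam; split.
   unfold Rdiv; apply Rmult_le_pos; [lra| left; apply Rinv_0_lt_compat; lra]. apply Rmult_le_reg_r with (w-u); [lra|].
   unfold Rdiv; rewrite Rmult_assoc, Rinv_l; lra. }
 pose proof (Hc u w lam Hu ltac:(lra) Hl) as H.
 replace (lam * u + (1 - lam) * w) with v in H by (unfold lam; field; lra).
 assert (E1 : (w - u) * lam = w - v) by (unfold lam; field; lra).
 assert (E2 : (w - u) * (1 - lam) = v - u) by (unfold lam; field; lra).
 apply Rmult_le_compat_l with (r := w - u) in H; [|lra].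
 rewrite Rmult_plus_distr_l, <- !Rmult_assoc, E1, E2 in H. exact H. Qed.

Lemma slope_a f u v w : convex_on_nonneg f -> 0 <= u -> u < v -> v < w ->
  (f v - f u) * (w - u) <= (f w - f u) * (v - u).
Proof. intros. pose proof (conv3 f u v w H H0 H1 H2). nra. Qed.
Lemma slope_b f u v w : convex_on_nonneg f -> 0 <= u -> u < v -> v < w ->
  (f w - f u) * (w - v) <= (f w - f v) * (w - u).
Proof. intros. pose proof (conv3 f u v w H H0 H1 H2). nra. Qed.
Lemma slope_c f u v w : convex_on_nonneg f -> 0 <= u -> u < v -> v < w ->
  (f v - f u) * (w - v) <= (f w - f v) * (v - u).
Proof. intros. pose proof (conv3 f u v w H H0 H1 H2). nra. Qed.

Lemma cvx_R1 f u v r : convex_on_nonneg f -> 0 <= u -> u < v -> right_deriv f u r ->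
  r * (v - u) <= f v - f u.
Proof. intros Hc Hu Huv Hd. destruct (Rle_dec (r * (v - u)) (f v - f u)) as [|Hn]; auto.
 exfalso. apply Rnot_le_lt in Hn.
 set (sg := (f v - f u) / (v - u)).
 assert (Hsg : sg < r). { unfold sg. apply Rmult_lt_reg_r with (v-u); [lra|].
   unfold Rdiv; rewrite Rmult_assoc, Rinv_l; lra. }
 destruct (Hd (r - sg) ltac:(lra)) as [de [Hde H]].
 set (h := Rmin de (v - u) / 2).
 assert (Hh : 0 < h < de /\ h < v - u). { unfold h. pose proof (Rmin_l de (v-u)). pose proof (Rmin_r de (v-u)).
   assert (0 < Rmin de (v-u)) by (apply Rmin_glb_lt; lra). lra. }
 specialize (H h ltac:(lra)). apply Rabs_def2 in H. destruct H as [H1 H2].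
 pose proof (slope_a f u (u + h) v Hc Hu ltac:(lra) ltac:(lra)) as S.
 set (q := (f (u + h) - f u) / h) in *.
 assert (Eq : f (u + h) - f u = q * h) by (unfold q; field; lra).
 rewrite Eq in S. replace (u + h - u) with h in S by ring.
 assert (Esg : f v - f u = sg * (v - u)) by (unfold sg; field; lra).
 rewrite Esg in S. assert (q > sg) by lra.
 assert (q * h * (v - u) > sg * (v - u) * h). { replace (sg * (v-u) * h) with (sg * h * (v-u)) by ring.
   apply Rmult_lt_compat_r; [lra|]. apply Rmult_lt_compat_r; lra. }
 lra. Qed.

Lemma L1 f u v l : convex_on_nonneg f -> 0 <= u -> u < v -> left_deriv f v l ->
  f v - f u <= l * (v - u).
Proof. intros Hc Hu Huv Hd. destruct (Rle_dec (f v - f u) (l * (v - u))) as [|Hn]; auto.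
 exfalso. apply Rnot_le_lt in Hn.
 set (sg := (f v - f u) / (v - u)).
 assert (Hsg : l < sg). { unfold sg. apply Rmult_lt_reg_r with (v-u); [lra|].
   unfold Rdiv; rewrite Rmult_assoc, Rinv_l; lra. }
 destruct (Hd (sg - l) ltac:(lra)) as [de [Hde H]].
 set (h := Rmin de (v - u) / 2).
 assert (Hh : 0 < h < de /\ h < v - u). { unfold h. pose proof (Rmin_l de (v-u)). pose proof (Rmin_r de (v-u)).
   assert (0 < Rmin de (v-u)) by (apply Rmin_glb_lt; lra). lra. }
 specialize (H h ltac:(lra)). apply Rabs_def2 in H. destruct H as [H1 H2].
 pose proof (slope_b f u (v - h) v Hc Hu ltac:(lra) ltac:(lra)) as S.
 set (q := (f v - f (v - h)) / h) in *.
 assert (Eq : f v - f (v - h) = q * h) by (unfold q; field; lra).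
 rewrite Eq in S. replace (v - (v - h)) with h in S by ring.
 assert (Esg : f v - f u = sg * (v - u)) by (unfold sg; field; lra).
 rewrite Esg in S. assert (q < sg) by lra.
 assert (q * h * (v - u) < sg * (v - u) * h). { replace (sg * (v-u) * h) with (sg * h * (v-u)) by ring.
   apply Rmult_lt_compat_r; [lra|]. apply Rmult_lt_compat_r; lra. }
 lra. Qed.

Lemma L2 f v w l : convex_on_nonneg f -> 0 < v -> v < w -> left_deriv f v l ->
  l * (w - v) <= f w - f v.
Proof. intros Hc Hv Hvw Hd. destruct (Rle_dec (l * (w - v)) (f w - f v)) as [|Hn]; auto.
 exfalso. apply Rnot_le_lt in Hn.
 set (sg := (f w - f v) / (w - v)).
 assert (Hsg : sg < l). { unfold sg. apply Rmult_lt_reg_r with (w-v); [lra|].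
   unfold Rdiv; rewrite Rmult_assoc, Rinv_l; lra. }
 destruct (Hd (l - sg) ltac:(lra)) as [de [Hde H]].
 set (h := Rmin de v / 2).
 assert (Hh : 0 < h < de /\ h < v). { unfold h. pose proof (Rmin_l de v). pose proof (Rmin_r de v).
   assert (0 < Rmin de v) by (apply Rmin_glb_lt; lra). lra. }
 specialize (H h ltac:(lra)). apply Rabs_def2 in H. destruct H as [H1 H2].
 pose proof (slope_c f (v - h) v w Hc ltac:(lra) ltac:(lra) ltac:(lra)) as S.
 set (q := (f v - f (v - h)) / h) in *.
 assert (Eq : f v - f (v - h) = q * h) by (unfold q; field; lra).
 rewrite Eq in S. replace (v - (v - h)) with h in S by ring.
 assert (Esg : f w - f v = sg * (w - v)) by (unfold sg; field; lra).
 rewrite Esg in S. assert (q > sg) by lra.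
 assert (q * h * (w - v) > sg * (w - v) * h). { replace (sg * (w-v) * h) with (sg * h * (w-v)) by ring.
   apply Rmult_lt_compat_r; [lra|]. apply Rmult_lt_compat_r; lra. }
 lra. Qed.

Lemma LR f v l r : convex_on_nonneg f -> 0 < v -> left_deriv f v l -> right_deriv f v r -> l <= r.
Proof. intros Hc Hv Hl Hr. destruct (Rle_dec l r) as [|Hn]; auto. exfalso. apply Rnot_le_lt in Hn.
 destruct (Hr (l - r) ltac:(lra)) as [de [Hde H]].
 specialize (H (de/2) ltac:(lra)). apply Rabs_def2 in H. destruct H as [H1 H2].
 pose proof (L2 f v (v + de/2) l Hc Hv ltac:(lra) Hl) as S.
 set (q := (f (v + de / 2) - f v) / (de / 2)) in *.
 assert (Eq : f (v + de/2) - f v = q * (de/2)) by (unfold q; field; lra).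
 rewrite Eq in S. replace (v + de/2 - v) with (de/2) in S by ring.
 assert (l <= q) by (apply Rmult_le_reg_r with (de/2); lra). lra. Qed.

Lemma tangent f x y g : convex_on_nonneg f -> 0 <= x -> 0 <= y -> right_deriv f x g ->
  (0 < x -> left_deriv f x g) -> f x + g * (y - x) <= f y.
Proof. intros Hc Hx Hy Hr Hl. destruct (Rtotal_order x y) as [H|[H|H]].
 pose proof (cvx_R1 f x y g Hc Hx H Hr). lra. subst; lra.
 pose proof (L1 f y x g Hc Hy H (Hl ltac:(lra))). lra. Qed.

Lemma deriv_mono f u v r l : convex_on_nonneg f -> 0 <= u -> u < v -> right_deriv f u r ->
  left_deriv f v l -> r <= l.
Proof. intros. pose proof (cvx_R1 f u v r H H0 H1 H2). pose proof (L1 f u v l H H0 H1 H3).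
 apply Rmult_le_reg_r with (v - u); lra. Qed.

Lemma dpl_right f x l : derivable_pt_lim f x l -> right_deriv f x l.
Proof. intros H eps He. destruct (H eps He) as [de Hd]. exists de; split. apply cond_pos.
 intros h Hh. apply Hd. lra. rewrite Rabs_right; lra. Qed.
Lemma dpl_left f x l : derivable_pt_lim f x l -> left_deriv f x l.
Proof. intros H eps He. destruct (H eps He) as [de Hd]. exists de; split. apply cond_pos.
 intros h Hh. specialize (Hd (-h) ltac:(lra) ltac:(rewrite Rabs_Ropp, Rabs_right; lra)).
 replace (x + - h) with (x - h) in Hd by ring.
 replace ((f x - f (x - h)) / h) with ((f (x - h) - f x) / - h) by (field; lra). exact Hd. Qed.

Lemma Rmax0_lip x y : Rabs (Rmax 0 y - Rmax 0 x) <= Rabs (y - x).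
Proof. unfold Rmax. destruct (Rle_dec 0 y); destruct (Rle_dec 0 x);
 unfold Rabs; repeat destruct Rcase_abs; lra. Qed.

Lemma cont_ext p x : continuous_on_nonneg p -> continuity_pt (fun q => p (Rmax 0 q)) x.
Proof. intros Hc. unfold continuity_pt, continue_in, limit1_in, limit_in. simpl.
 intros eps He. assert (H0 : 0 <= Rmax 0 x) by apply Rmax_l.
 destruct (Hc (Rmax 0 x) H0 eps He) as [de [Hde H]].
 exists de; split; auto. intros y [_ Hy]. unfold R_dist in *.
 apply H. apply Rmax_l. eapply Rle_lt_trans; [apply Rmax0_lip|exact Hy]. Qed.

Lemma exRInt_p p a b : continuous_on_nonneg p -> 0 <= a -> 0 <= b -> ex_RInt p a b.
Proof. intros Hc Ha Hb. apply ex_RInt_ext with (f := fun q => p (Rmax 0 q)).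
 intros x Hx. assert (0 < x). { pose proof (Rmin_glb a b 0). destruct Hx.
  unfold Rmin in *. destruct (Rle_dec a b); lra. }
 rewrite Rmax_right; lra.
 apply (ex_RInt_continuous (V := R_CompleteNormedModule)). intros z _. apply continuity_pt_filterlim. apply cont_ext; auto. Qed.

Lemma integral_RInt p a b : ex_RInt p a b -> integral p a b = RInt p a b.
Proof. intros H. pose proof (ex_RInt_Reals_0 _ _ _ H) as pr.
 unfold integral. destruct (epsilon_spec (inhabits 0)
   (fun v => exists pr : Riemann_integrable p a b, RiemannInt pr = v)) as [pr' E].
 exists (RiemannInt pr); exists pr; auto.
 rewrite <- E. symmetry; apply RInt_Reals. Qed.

Lemma is_RInt_lin A B a b : is_RInt (fun q => A + B * q) a b (A * (b - a) + B * (b * b - a * a) / 2).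
Proof.
 replace (A * (b - a) + B * (b * b - a * a) / 2) with
   (minus ((fun q => A * q + B * (q * q) / 2) b) ((fun q => A * q + B * (q * q) / 2) a)).
 apply (is_RInt_derive (V := R_CompleteNormedModule) (fun q => A * q + B * (q * q) / 2)). intros x _. auto_derive. auto. field.
 intros x _. apply continuity_pt_filterlim. reg.
 unfold minus, plus, opp; simpl; field. Qed.

Lemma RInt_upper f A B a b : a <= b -> ex_RInt f a b ->
  (forall q, a < q < b -> f q <= A + B * q) -> RInt f a b <= A * (b - a) + B * (b * b - a * a) / 2.
Proof. intros Hab Hf H. rewrite <- (is_RInt_unique _ _ _ _ (is_RInt_lin A B a b)).
 apply RInt_le; auto. eexists; apply is_RInt_lin. Qed.

Lemma RInt_lower f A B a b : a <= b -> ex_RInt f a b ->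
  (forall q, a < q < b -> A + B * q <= f q) -> A * (b - a) + B * (b * b - a * a) / 2 <= RInt f a b.
Proof. intros Hab Hf H. rewrite <- (is_RInt_unique _ _ _ _ (is_RInt_lin A B a b)).
 apply RInt_le; auto. eexists; apply is_RInt_lin. Qed.

Lemma RInt_Chasles_R f a b c : ex_RInt f a b -> ex_RInt f b c -> RInt f a c = RInt f a b + RInt f b c.
Proof. intros H1 H2. rewrite <- (RInt_Chasles f a b c H1 H2); auto. Qed.

Lemma phi_facts c : 0 <= c -> 1 <= phi_of c /\
  ((phi_of c = 1 /\ 3 <= c) \/ phi_of c ^ 2 + (c - 2) * phi_of c - 2 = 0).
Proof. intros Hc. unfold phi_of.
 set (S := sqrt (c ^ 2 - 4 * c + 12)).
 assert (HS : S * S = c ^ 2 - 4 * c + 12) by (unfold S; apply sqrt_sqrt; nra).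
 assert (HS0 : 0 <= S) by (unfold S; apply sqrt_pos).
 unfold Rmax. destruct (Rle_dec ((2 - c + S) / 2) 1) as [H|H].
 split; [lra|left; split; auto]. nra.
 split. lra. right. nra. Qed.

Lemma key c X m : 0 <= c -> 0 < m -> m <= X ->
  f_bound c * (X * X + 2 * m * X + c * m * m) <= X * X + 2 * m * m /\ 0 <= f_bound c <= 1.
Proof. intros Hc Hm HX. destruct (phi_facts c Hc) as [H1 H2]. unfold f_bound.
 set (r := phi_of c) in *.
 assert (Hd : 0 < r ^ 2 + 2 * r + c) by nra.
 split; [|split].
 - apply Rmult_le_reg_r with (r ^ 2 + 2 * r + c); auto.
   replace ((r ^ 2 + 2) / (r ^ 2 + 2 * r + c) * (X * X + 2 * m * X + c * m * m) * (r ^ 2 + 2 * r + c))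
     with ((r ^ 2 + 2) * (X * X + 2 * m * X + c * m * m)) by (field; lra).
   destruct H2 as [[E Hc3]|E].
   + rewrite E. assert (0 <= (X - m) * (c * (X + m) - 6 * m)). apply Rmult_le_pos; nra. nra.
   + set (K := r ^ 2 + (c - 2) * r - 2) in *.
     assert (Id : r * ((X * X + 2 * m * m) * (r ^ 2 + 2 * r + c) - (r ^ 2 + 2) * (X * X + 2 * m * X + c * m * m))
        = (r ^ 2 + 2) * (X - r * m) ^ 2 + K * (X * X - r * r * m * m)) by (unfold K; ring).
     rewrite E, Rmult_0_l, Rplus_0_r in Id.
     assert (0 <= (r ^ 2 + 2) * (X - r * m) ^ 2) by (apply Rmult_le_pos; [nra | apply pow2_ge_0]).
     assert (0 <= (X * X + 2 * m * m) * (r ^ 2 + 2 * r + c) - (r ^ 2 + 2) * (X * X + 2 * m * X + c * m * m)).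
     { apply Rmult_le_reg_l with r; lra. } lra.
 - apply Rmult_le_pos; [nra| left; apply Rinv_0_lt_compat; auto].
 - apply Rmult_le_reg_r with (r ^ 2 + 2 * r + c); auto. unfold Rdiv.
   rewrite Rmult_assoc, Rinv_l; lra. Qed.

Lemma I2_bound p β D a X Y : continuous_on_nonneg p -> 0 <= X -> 0 <= Y -> 0 < a -> 0 <= D ->
  (forall q, X <= q -> p q <= β + Rmax (D - a * (q - X)) 0) ->
  (forall q, 0 <= q <= X -> β <= p q) ->
  RInt p X Y <= β * (Y - X) + D * D / (2 * a).
Proof. intros Hc HX HY Ha HD Hup Hlo.
 assert (HDa : 0 <= D * D / (2 * a)) by (apply Rmult_le_pos; [nra| left; apply Rinv_0_lt_compat; lra]).
 destruct (Rle_dec Y X) as [HYX|HYX].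
 - assert (RInt p Y X >= β * (X - Y)).
   { pose proof (RInt_lower p β 0 Y X HYX (exRInt_p p Y X Hc HY HX)). apply Rle_ge.
     replace (β * (X - Y)) with (β * (X - Y) + 0 * (X * X - Y * Y) / 2) by field. apply H.
     intros q Hq. rewrite Rmult_0_l, Rplus_0_r. apply Hlo; lra. }
   rewrite <- (opp_RInt_swap p Y X (exRInt_p p Y X Hc HY HX)). simpl. unfold opp; simpl. lra.
 - apply Rnot_le_lt in HYX.
   assert (Sub : forall Y', X <= Y' <= X + D / a -> RInt p X Y' <= β * (Y' - X) + D * D / (2 * a)).
   { intros Y' HY'. eapply Rle_trans.
     apply (RInt_upper p (β + D + a * X) (- a) X Y' ltac:(lra) (exRInt_p p X Y' Hc HX ltac:(lra))).
     intros q Hq. specialize (Hup q ltac:(lra)). rewrite Rmax_left in Hup. lra.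
     assert (q - X <= D / a) by lra. assert (a * (q - X) <= D).
     { apply Rmult_le_reg_r with (/ a). apply Rinv_0_lt_compat; lra.
       replace (D * / a) with (D / a) by reflexivity. rewrite Rmult_comm, <- Rmult_assoc, Rinv_l; lra. }
     lra.
     assert (E : (β + D + a * X) * (Y' - X) + - a * (Y' * Y' - X * X) / 2 =
        β * (Y' - X) + D * D / (2 * a) - (D - a * (Y' - X)) ^ 2 / (2 * a)) by (field; lra).
     rewrite E. assert (0 <= (D - a * (Y' - X)) ^ 2 / (2 * a)).
     apply Rmult_le_pos; [apply pow2_ge_0| left; apply Rinv_0_lt_compat; lra]. lra. }
   assert (HZ : 0 <= D / a) by (apply Rmult_le_pos; [lra| left; apply Rinv_0_lt_compat; lra]).
   destruct (Rle_dec Y (X + D / a)) as [HYZ|HYZ].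
   + apply Sub; lra.
   + apply Rnot_le_lt in HYZ. set (Z := X + D / a) in *. assert (HZ0 : X <= Z) by (unfold Z; lra).
     rewrite (RInt_Chasles_R p X Z Y (exRInt_p p X Z Hc HX ltac:(lra)) (exRInt_p p Z Y Hc ltac:(lra) HY)).
     pose proof (Sub Z ltac:(lra)).
     assert (RInt p Z Y <= β * (Y - Z)).
     { pose proof (RInt_upper p β 0 Z Y ltac:(lra) (exRInt_p p Z Y Hc ltac:(lra) HY)).
       replace (β * (Y - Z)) with (β * (Y - Z) + 0 * (Y * Y - Z * Z) / 2) by field. apply H0.
       intros q Hq. rewrite Rmult_0_l, Rplus_0_r. specialize (Hup q ltac:(lra)).
       rewrite Rmax_right in Hup. lra.
       assert (D / a < q - X) by (unfold Z in Hq; lra).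
       assert (D < a * (q - X)).
       { apply Rmult_lt_reg_r with (/ a). apply Rinv_0_lt_compat; lra.
         replace (D * / a) with (D / a) by reflexivity. rewrite Rmult_comm, <- Rmult_assoc, Rinv_l; lra. }
       lra. }
     lra. Qed.

Lemma I_pos p X P : continuous_on_nonneg p -> 0 < X -> (forall q, 0 <= q <= X -> P <= p q) ->
  P < p 0 -> P * X < RInt p 0 X.
Proof. intros Hc HX Hlo Hp0.
 destruct (Hc 0 (Rle_refl 0) ((p 0 - P) / 2) ltac:(lra)) as [de [Hde H]].
 set (h := Rmin (de / 2) X).
 assert (Hh : 0 < h <= X /\ h < de). { unfold h. pose proof (Rmin_l (de/2) X). pose proof (Rmin_r (de/2) X).
   assert (0 < Rmin (de/2) X) by (apply Rmin_glb_lt; lra). lra. }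
 rewrite (RInt_Chasles_R p 0 h X (exRInt_p p 0 h Hc ltac:(lra) ltac:(lra)) (exRInt_p p h X Hc ltac:(lra) ltac:(lra))).
 assert (H1 : (P + (p 0 - P) / 2) * h <= RInt p 0 h).
 { pose proof (RInt_lower p (P + (p 0 - P) / 2) 0 0 h ltac:(lra) (exRInt_p p 0 h Hc ltac:(lra) ltac:(lra))).
   replace ((P + (p 0 - P) / 2) * h) with ((P + (p 0 - P) / 2) * (h - 0) + 0 * (h * h - 0 * 0) / 2) by field.
   apply H0. intros q Hq. rewrite Rmult_0_l, Rplus_0_r.
   specialize (H q ltac:(lra) ltac:(rewrite Rminus_0_r, Rabs_right; lra)). apply Rabs_def2 in H. lra. }
 assert (H2 : P * (X - h) <= RInt p h X).
 { pose proof (RInt_lower p P 0 h X ltac:(lra) (exRInt_p p h X Hc ltac:(lra) ltac:(lra))).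
   replace (P * (X - h)) with (P * (X - h) + 0 * (X * X - h * h) / 2) by field.
   apply H0. intros q Hq. rewrite Rmult_0_l, Rplus_0_r. apply Hlo; lra. }
 assert (0 < (p 0 - P) / 2 * h) by (apply Rmult_lt_0_compat; lra). nra. Qed.

Lemma inf_val p s c0 : continuous_on_nonneg p -> is_inf (fun q => 0 <= q /\ p q = c0) s ->
  0 <= s /\ p s = c0.
Proof. intros Hc [H1 H2].
 assert (Hne : exists q, 0 <= q /\ p q = c0).
 { apply Classical_Prop.NNPP. intro Hn. assert (s + 1 <= s). apply H2. intros q Hq. exfalso; apply Hn; eauto. lra. }
 assert (Hs : 0 <= s). { apply H2. intros q [Hq _]; auto. }
 split; auto. apply Classical_Prop.NNPP. intro Hn.
 assert (He : 0 < Rabs (p s - c0)) by (apply Rabs_pos_lt; intro; apply Hn; lra).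
 destruct (Hc s Hs _ He) as [de [Hde H]].
 destruct (Classical_Prop.classic (exists q, (0 <= q /\ p q = c0) /\ q < s + de)) as [[q [[Hq Hpq] Hlt]]|Hno].
 - assert (s <= q) by (apply H1; auto). specialize (H q Hq ltac:(rewrite Rabs_right; lra)).
   rewrite Hpq in H. rewrite Rabs_minus_sym in H. lra.
 - assert (s + de <= s). { apply H2. intros q Hq. apply Rnot_lt_le. intro; apply Hno; eauto. } lra. Qed.

Section Costs.
Lemma C_rd N C dC n y : assumption1 N C dC -> (n < N)%nat -> 0 <= y -> right_deriv (C n) y (dC n y).
Proof. intros A Hn Hy. destruct (A n Hn) as [_ [_ [_ [Hd [_ [Hr _]]]]]].
 destruct (Rle_lt_or_eq_dec 0 y Hy) as [H|H]. apply dpl_right, Hd; auto. subst; auto. Qed.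
Lemma C_ld N C dC n y : assumption1 N C dC -> (n < N)%nat -> 0 < y -> left_deriv (C n) y (dC n y).
Proof. intros A Hn Hy. destruct (A n Hn) as [_ [_ [_ [Hd _]]]]. apply dpl_left, Hd; auto. Qed.
Lemma C_mono N C dC n u v : assumption1 N C dC -> (n < N)%nat -> 0 <= u <= v -> dC n u <= dC n v.
Proof. intros A Hn Huv. destruct (A n Hn) as [Hc _].
 destruct (Rle_lt_or_eq_dec u v ltac:(lra)) as [H|H]; [|subst; lra].
 apply (deriv_mono (C n) u v); auto; try lra. apply (C_rd N C dC); auto; lra.
 apply (C_ld N C dC); auto; lra. Qed.
Lemma C_tan N C dC n u y : assumption1 N C dC -> (n < N)%nat -> 0 <= u -> 0 <= y ->
  C n u + dC n u * (y - u) <= C n y.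
Proof. intros A Hn Hu Hy. destruct (A n Hn) as [Hc _]. apply tangent; auto.
 apply (C_rd N C dC); auto. intros; apply (C_ld N C dC); auto. Qed.
Lemma C_zero N C dC n : assumption1 N C dC -> (n < N)%nat -> C n 0 = 0.
Proof. intros A Hn. destruct (A n Hn) as [_ [_ [_ [_ [_ [_ H]]]]]]; auto. Qed.
End Costs.

Theorem corollary2
  (N : nat) (p dpl dpr : R -> R) (C dC : nat -> R -> R) (s t : R) :
  (1 <= N)%nat ->
  assumption1 N C dC ->
  assumption2 p dpl dpr ->
  assumption3 N p dC ->
  assumption4 N p dC ->
  convex_on_nonneg p ->
  is_inf (fun q => 0 <= q /\ p q = minN N (fun n => dC n 0)) s ->
  is_inf (fun q => 0 <= q /\ p q + q * dpr q <= minN N (fun n => dC n q)) t ->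
  dpl s < 0 ->
  forall x xS : nat -> R,
    cournot_candidate N p dpl dpr dC x ->
    social_optimum N p C xS ->
    f_bound (dpr t / dpl s) <= efficiency N p C x xS.
Proof.
 intros HN A1 A2 A3 A4 Hpc Hs Ht Hdls x xS Hcand Hopt.
 destruct A2 as [Hpcont [Hpnn [Hpdec [Hp0 [Hpr Hpl]]]]].
 destruct Hcand as [Hxnn Hcc]. pose proof Hopt as [HxSnn HxSopt].
 set (c0 := minN N (fun n => dC n 0)) in *.
 set (X := sumN N x). set (P := p X). set (Y := sumN N xS).
 set (Q := sumN N (fun n => x n * x n)).
 destruct (argmax N x HN) as [m [Hm Hmax]].
 assert (HX0 : 0 <= X) by (apply sumN_nonneg; auto).
 assert (HY0 : 0 <= Y) by (apply sumN_nonneg; auto).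
 assert (HxmX : x m <= X) by (apply sumN_term; auto).
 assert (Hxm : 0 < x m).
 { destruct (Rle_lt_or_eq_dec 0 (x m) (Hxnn m Hm)) as [H|H]; auto. exfalso.
   assert (Hz : forall n, (n < N)%nat -> x n = 0).
   { intros n Hn. pose proof (Hmax n Hn). pose proof (Hxnn n Hn). lra. }
   assert (HX : X = 0). { unfold X. rewrite (sumN_ext N x (fun _ => 0)); auto. apply sumN_const0. }
   assert (p 0 <= c0). { apply minN_ge; auto. intros n Hn. destruct (Hcc n Hn) as [_ H2].
     rewrite (Hz n Hn) in H2. fold X in H2. rewrite HX in H2. lra. }
   unfold assumption4 in A4. fold c0 in A4. lra. }
 assert (HX : 0 < X) by lra.
 assert (Hdeq : dpl X = dpr X).
 { destruct (Hcc m Hm) as [H1 H2]. specialize (H1 Hxm). fold X P in H1, H2.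
   assert (dpr X <= dpl X) by (apply Rmult_le_reg_l with (x m); lra).
   pose proof (LR p X (dpl X) (dpr X) Hpc HX (Hpl X HX) (Hpr X HX0)). lra. }
 set (d := dpr X) in *.
 assert (Hd0 : d <= 0).
 { pose proof (cvx_R1 p X (X + 1) d Hpc HX0 ltac:(lra) (Hpr X HX0)). pose proof (Hpdec X (X+1) ltac:(lra)). lra. }
 assert (Hptan : forall q, 0 <= q -> P + d * (q - X) <= p q).
 { intros q Hq. apply tangent; auto. intros _. rewrite <- Hdeq. apply Hpl; auto. }
 assert (Hal1 : forall n, (n < N)%nat -> P + x n * d <= dC n (x n)).
 { intros n Hn. destruct (Hcc n Hn) as [_ H]; exact H. }
 assert (Hal2 : forall n, (n < N)%nat -> dC n (x n) * x n = P * x n + d * (x n * x n)).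
 { intros n Hn. destruct (Rle_lt_or_eq_dec 0 (x n) (Hxnn n Hn)) as [H|H].
   destruct (Hcc n Hn) as [H1 H2]. specialize (H1 H). fold X P in H1. rewrite Hdeq in H1. fold d in H1. fold X P in H2. fold d in H2.
   assert (dC n (x n) = P + x n * d) by lra. rewrite H0; ring. rewrite <- H; ring. }
 set (β := P + d * x m).
 assert (Hal3 : forall n, (n < N)%nat -> β <= dC n (x n)).
 { intros n Hn. pose proof (Hal1 n Hn). pose proof (Hmax n Hn). unfold β. nra. }
 assert (Hbc0 : c0 <= β).
 { assert (E : dC m (x m) = β). { pose proof (Hal2 m Hm). unfold β. apply Rmult_eq_reg_r with (x m); lra. }
   rewrite <- E. eapply Rle_trans. apply (minN_le N (fun n => dC n 0) m Hm).
   apply (C_mono N C dC); auto; lra. }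
 assert (HCx : sumN N (fun n => C n (x n)) <= P * X + d * Q).
 { unfold X, Q. rewrite <- !sumN_scal, <- sumN_plus. apply sumN_le. intros n Hn.
   pose proof (C_tan N C dC n (x n) 0 A1 Hn (Hxnn n Hn) (Rle_refl 0)). rewrite (C_zero N C dC n A1 Hn) in H.
   pose proof (Hal2 n Hn). lra. }
 assert (HCxS : sumN N (fun n => C n (x n)) + β * Y - (P * X + d * Q) <= sumN N (fun n => C n (xS n))).
 { unfold X, Y, Q.
   replace (sumN N (fun n => C n (x n)) + β * sumN N xS - (P * sumN N x + d * sumN N (fun n => x n * x n)))
     with (sumN N (fun n => C n (x n) + (β * xS n + (- P * x n + - d * (x n * x n))))).
   apply sumN_le. intros n Hn.
   pose proof (C_tan N C dC n (x n) (xS n) A1 Hn (Hxnn n Hn) (HxSnn n Hn)).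
   pose proof (Hal2 n Hn). pose proof (Hal3 n Hn). pose proof (HxSnn n Hn). nra.
   rewrite !sumN_plus, !sumN_scal. ring. }
 assert (HQ : x m * x m <= Q) by (apply (sumN_term N (fun n => x n * x n)); auto; intros n Hn; pose proof (Hxnn n Hn); nra).
 assert (Ht0 : 0 <= t). { destruct Ht as [_ H]. apply H. intros q [Hq _]; auto. }
 assert (HtX : t <= X).
 { destruct Ht as [H _]. apply H. split; auto. apply minN_ge; auto. intros n Hn.
   pose proof (Hal1 n Hn). pose proof (sumN_term N x n Hxnn Hn). fold X in H1.
   pose proof (C_mono N C dC n (x n) X A1 Hn ltac:(pose proof (Hxnn n Hn); lra)). change (P + X * d <= dC n X). assert (0 <= X - x n) by lra. assert ((X - x n) * d <= 0) by nra. nra. }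
 assert (Hdt : dpr t <= d).
 { destruct (Rle_lt_or_eq_dec t X HtX) as [H|H]. rewrite <- Hdeq.
   apply (deriv_mono p t X); auto. subst; unfold d; lra. }
 destruct (inf_val p s c0 Hpcont Hs) as [Hs0 Hps].
 set (a := - dpl s).
 assert (Ha : 0 < a) by (unfold a; lra).
 set (c := dpr t / dpl s).
 assert (Hc0 : 0 <= c). { unfold c. replace (dpr t / dpl s) with ((- dpr t) / a) by (unfold a; field; lra).
   apply Rmult_le_pos; [lra| left; apply Rinv_0_lt_compat; lra]. }
 assert (Hca : c * a = - dpr t) by (unfold c, a; field; lra).
 assert (HI1 : P * X - d * X * X / 2 <= RInt p 0 X).
 { pose proof (RInt_lower p (P - d * X) d 0 X ltac:(lra) (exRInt_p p 0 X Hpcont (Rle_refl 0) HX0)).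
   replace (P * X - d * X * X / 2) with ((P - d * X) * (X - 0) + d * (X * X - 0 * 0) / 2) by field.
   apply H. intros q Hq. pose proof (Hptan q ltac:(lra)). lra. }
 assert (HIp : P * X < RInt p 0 X).
 { apply I_pos; auto. intros q Hq. apply Hpdec; lra.
   destruct (Rlt_or_le d 0) as [Hdn|Hdz].
   pose proof (Hptan 0 (Rle_refl 0)). nra.
   destruct A3 as [R0 [HR0 HpR0]]. fold c0 in HpR0. pose proof (Hptan R0 ltac:(lra)).
   assert (d = 0) by lra. subst d. unfold assumption4 in A4. fold c0 in A4. nra. }
 assert (HI2 : RInt p X Y <= β * (Y - X) + (- d * x m) * (- d * x m) / (2 * a)).
 { apply I2_bound; auto. nra.
   - intros q Hq. destruct (Rle_lt_dec s q) as [Hsq|Hsq].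
     + pose proof (Hpdec s q ltac:(lra)). eapply Rle_trans with c0; [lra|].
       pose proof (Rmax_r (- d * x m - a * (q - X)) 0). lra.
     + eapply Rle_trans; [|apply Rplus_le_compat_l; apply Rmax_l].
       destruct (Rle_lt_or_eq_dec X q Hq) as [HXq|HXq]; [| subst q; unfold β, P; lra].
       pose proof (slope_a p X q s Hpc HX0 HXq Hsq).
       pose proof (L1 p X s (dpl s) Hpc HX0 ltac:(lra) (Hpl s ltac:(lra))).
       fold P in H, H0. fold a in H0. unfold β.
       assert ((p s - P) * (q - X) <= dpl s * (s - X) * (q - X)) by (apply Rmult_le_compat_r; lra).
       assert ((p q - P + a * (q - X)) * (s - X) <= 0) by (unfold a; lra).
       assert (p q - P + a * (q - X) <= 0).
       { apply Rnot_lt_le; intro Hc. assert (0 < (p q - P + a * (q - X)) * (s - X)) by (apply Rmult_lt_0_compat; lra). lra. }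
       lra.
   - intros q Hq. pose proof (Hpdec q X Hq). fold P in H. unfold β. nra. }
 unfold efficiency, welfare.
 rewrite (integral_RInt p 0 (sumN N x) (exRInt_p p 0 _ Hpcont (Rle_refl 0) HX0)).
 rewrite (integral_RInt p 0 (sumN N xS) (exRInt_p p 0 _ Hpcont (Rle_refl 0) HY0)).
 fold X Y.
 rewrite (RInt_Chasles_R p 0 X Y (exRInt_p p 0 X Hpcont (Rle_refl 0) HX0) (exRInt_p p X Y Hpcont HX0 HY0)).
 set (Wx := RInt p 0 X - sumN N (fun n => C n (x n))).
 set (WS := RInt p 0 X + RInt p X Y - sumN N (fun n => C n (xS n))).
 assert (HWSx : Wx <= WS).
 { pose proof (HxSopt x Hxnn). unfold welfare in H.
   rewrite (integral_RInt p 0 (sumN N x) (exRInt_p p 0 _ Hpcont (Rle_refl 0) HX0)) in H.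
   rewrite (integral_RInt p 0 (sumN N xS) (exRInt_p p 0 _ Hpcont (Rle_refl 0) HY0)) in H.
   fold X Y in H.
   rewrite (RInt_Chasles_R p 0 X Y (exRInt_p p 0 X Hpcont (Rle_refl 0) HX0) (exRInt_p p X Y Hpcont HX0 HY0)) in H.
   exact H. }
 set (e := - d).
 assert (He : 0 <= e) by (unfold e; lra).
 assert (Hec : e <= c * a) by (unfold e; lra).
 assert (HWx : e * (X * X / 2 + Q) <= Wx) by (unfold Wx, e; lra).
 assert (HWxp : 0 < Wx).
 { assert (0 <= e * Q). apply Rmult_le_pos; auto. pose proof (sumN_nonneg N (fun n => x n * x n)). nra.
   unfold Wx. unfold e in H. lra. }
 assert (Hsq : e * e * (x m * x m) / (2 * a) <= e * (c * (x m * x m)) / 2).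
 { assert (e * e <= e * (c * a)) by nra.
   apply Rmult_le_reg_r with (2 * a); [lra|].
   replace (e * e * (x m * x m) / (2 * a) * (2 * a)) with (e * e * (x m * x m)) by (field; lra).
   nra. }
 assert (HWS : WS <= Wx + e * (x m * X - Q + c * (x m * x m) / 2)).
 { unfold WS, Wx.
   replace ((- d * x m) * (- d * x m) / (2 * a)) with (e * e * (x m * x m) / (2 * a)) in HI2 by (unfold e; field; lra).
   unfold β in HCxS, HI2. unfold e in *. nra. }
 destruct (key c X (x m) Hc0 Hxm HxmX) as [K [Kf0 Kf1]].
 set (fb := f_bound c) in *.
 assert (Hfin : fb * WS <= Wx).
 { assert (fb * WS <= fb * Wx + fb * (e * (x m * X - Q + c * (x m * x m) / 2))) by nra.
   assert (e * (fb * (x m * X - Q + c * (x m * x m) / 2)) <= e * ((1 - fb) * (X * X / 2 + Q))).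
   { apply Rmult_le_compat_l; auto. nra. }
   assert ((1 - fb) * (e * (X * X / 2 + Q)) <= (1 - fb) * Wx) by (apply Rmult_le_compat_l; lra).
   nra. }
 assert (HWSp : 0 < WS) by lra.
 apply Rmult_le_reg_r with WS; auto. unfold Rdiv. rewrite Rmult_assoc, Rinv_l; lra.
Qed.
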